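(* Let $v_{i_1},\dots,v_{i_m}$ be distinct variables and $e,f,g_1,\dots,g_m,h_1,\dots,h_m\in\mathsf{Exp}/{\sim}$. Then $\mathsf{bd}\big(e[(g_1,\dots,g_m)/(v_{i_1},\dots,v_{i_m})],\,f[(h_1,\dots,h_m)/(v_{i_1},\dots,v_{i_m})]\big)\le\max\{\mathsf{bd}(e,f),\max_{1\le j\le m}\mathsf{bd}(g_j,h_j)\}$.
   Context: Fix variables $V=\{v_1,v_2,\dots\}$ and letters $\Sigma$. Expressions: $e\in\mathsf{Exp}::=0\mid v\ (v\in V)\mid a.e\mid e+f\mid\mu v.e$ ($\mu v$ binds $v$); $e[\vec f/\vec v]$ is simultaneous capture-avoiding substitution. The prechart $(\mathsf{Exp},\partial)$: least relations with $a.e\xrightarrow{a}e$; $v\rhd v$; $e+f$ has all transitions and outputs of $e$ and of $f$; $\mu w.e\rhd v$ if $e\rhd v$, $v\ne w$; $\mu v.e\xrightarrow{a}e'[\mu v.e/v]$ if $e\xrightarrow{a}e'$. Bisimilarity $\sim$ is a congruence for all operations including substitution; $\mathsf{Exp}/{\sim}$ is a prechart $\bar\partial$ via $[e]\xrightarrow{a}[e']$ iff $e\xrightarrow{a}e'$, $[e]\rhd v$ iff $e\rhd v$; it maps $[e]$ to $\beta([e])=\{(a,[e'])\}\cup\{v\mid e\rhd v\}$, a finite set. A 1-bounded pseudometric on $X$ is $d:X\times X\to[0,1]$ with $d(x,x)=0$, symmetry, triangle inequality, ordered pointwise. $d^\uparrow$ on $\Sigma\times X+V$: $d^\uparrow((a,x),(a,y))=\tfrac12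 d(x,y)$, $0$ if equal, $1$ otherwise. $\mathcal H(d)(A,B)=\max\{\sup_{x\in A}\inf_{y\in B}d(x,y),\sup_{y\in B}\inf_{x\in A}d(y,x)\}$, $\sup\emptyset=0$, $\inf\emptyset=1$. $\mathsf{bd}$ is the least fixpoint of $d\mapsto\big((x,y)\mapsto\mathcal H(d^\uparrow)(\beta(x),\beta(y))\big)$ on pseudometrics on $\mathsf{Exp}/{\sim}$. *)

(* Defs.v *)
From HB Require Import structures.
From mathcomp Require Import all_boot all_order all_algebra.
From mathcomp Require Import boolp classical_sets reals.
Set Implicit Arguments. Unset Strict Implicit. Unset Printing Implicit Defensive.
Import Order.TTheory GRing.Theory Num.Theory.
Local Open Scope classical_set_scope.
Local Open Scope ring_scope.

(* Variables V = {v_0, v_1, ...} are represented by nat; letters by Sigma. *)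
Section Syntax.
Variable Sigma : Type.

Inductive Exp : Type :=
| Zero : Exp
| Var : nat -> Exp
| Act : Sigma -> Exp -> Exp
| Plus : Exp -> Exp -> Exp
| Mu : nat -> Exp -> Exp.   (* Mu v e binds v in e *)

Fixpoint fv (e : Exp) : seq nat :=
  match e with
  | Zero => [::]
  | Var v => [:: v]
  | Act _ e => fv e
  | Plus e f => fv e ++ fv f
  | Mu w e => [seq u <- fv e | u != w]
  end.

Definition fresh (l : seq nat) : nat := (foldr maxn 0%N l).+1.

Definition upd (s : nat -> Exp) (w : nat) (x : Exp) : nat -> Exp :=
  fun u => if u == w then x else s u.

(* Simultaneous capture-avoiding substitution: [subst s e] replaces every free
   occurrence of u in e by (s u); bound variables are renamed to a fresh
   variable whenever they would capture a free variable of a substituted term. *)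
Fixpoint subst (s : nat -> Exp) (e : Exp) : Exp :=
  match e with
  | Zero => Zero
  | Var v => s v
  | Act a e => Act a (subst s e)
  | Plus e f => Plus (subst s e) (subst s f)
  | Mu w e =>
      let avoid := flatten [seq fv (s u) | u <- [seq u <- fv e | u != w]] in
      let w' := if w \in avoid then fresh avoid else w in
      Mu w' (subst (upd s w (Var w')) e)
  end.

Inductive step : Exp -> Sigma -> Exp -> Prop :=
| step_act a e : step (Act a e) a e
| step_plusl e f a e' : step e a e' -> step (Plus e f) a e'
| step_plusr e f a f' : step f a f' -> step (Plus e f) a f'
| step_mu v e a e' : step e a e' ->
    step (Mu v e) a (subst (upd Var v (Mu v e)) e').

Inductive out : Exp -> nat -> Prop :=
| out_var v : out (Var v) v
| out_plusl e f v : out e v -> out (Plus e f) v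
| out_plusr e f v : out f v -> out (Plus e f) v
| out_mu w e v : out e v -> v <> w -> out (Mu w e) v.

Definition bisimulation (Rel : Exp -> Exp -> Prop) : Prop :=
  forall e f, Rel e f ->
    (forall a e', step e a e' -> exists2 f', step f a f' & Rel e' f') /\
    (forall a f', step f a f' -> exists2 e', step e a e' & Rel e' f') /\
    (forall v, out e v <-> out f v).

Definition bisim (e f : Exp) : Prop :=
  exists2 Rel, bisimulation Rel & Rel e f.

(* The quotient Exp/~ : bisimilarity classes. *)
Definition Q : Type := {P : Exp -> Prop | exists e, P = bisim e}.

Definition cls (e : Exp) : Q := exist _ (bisim e) (ex_intro _ e erefl).

Definition qstep (X : Q) (a : Sigma) (Y : Q) : Prop :=
  exists e e', [/\ X = cls e, Y = cls e' & step e a e'].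
Definition qout (X : Q) (v : nat) : Prop :=
  exists2 e, X = cls e & out e v.

Definition beta (X : Q) : set ((Sigma * Q) + nat) :=
  [set z | match z with
           | inl (a, Y) => qstep X a Y
           | inr v => qout X v
           end].

Definition senv (m : nat) (vs : 'I_m -> nat) (gs : 'I_m -> Exp) : nat -> Exp :=
  fun u => if [pick j | vs j == u] is Some j then gs j else Var u.

End Syntax.

Section Metric.
Variables (R : realType) (Sigma : Type).

Definition pseudometric (X : Type) (d : X -> X -> R) : Prop :=
  [/\ forall x y, 0 <= d x y <= 1,
      forall x, d x x = 0,
      forall x y, d x y = d y x &
      forall x y z, d x z <= d x y + d y z].

Definition dup (X : Type) (d : X -> X -> R)
    (z1 z2 : (Sigma * X) + nat) : R :=
  match z1, z2 with
  | inl (a, x), inl (b, y) => if pselect (a = b) then d x y / 2 else 1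
  | inr v, inr w => if v == w then 0 else 1
  | _, _ => 1
  end.

Definition sup0 (A : set R) : R := if pselect (A = set0) then 0 else sup A.
Definition inf1 (A : set R) : R := if pselect (A = set0) then 1 else inf A.

Definition hausdorff (T : Type) (d : T -> T -> R) (A B : set T) : R :=
  Num.max (sup0 [set sup_el | exists2 x, A x & sup_el = inf1 [set d x y | y in B]])
          (sup0 [set sup_el | exists2 y, B y & sup_el = inf1 [set d y x | x in A]]).

Definition Phi (d : Q Sigma -> Q Sigma -> R) : Q Sigma -> Q Sigma -> R :=
  fun x y => hausdorff (dup d) (beta x) (beta y).

Definition is_bd (bd : Q Sigma -> Q Sigma -> R) : Prop :=
  [/\ pseudometric bd,
      Phi bd = bd &
      forall d, pseudometric d -> Phi d = d -> forall x y, bd x y <= d x y].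

End Metric.

(* Main.v *)
Require Import Defs.
From HB Require Import structures.
From mathcomp Require Import all_boot all_order all_algebra.
From mathcomp Require Import boolp classical_sets reals.
From mathcomp Require Import zify.
Import Order.TTheory GRing.Theory Num.Theory.
Set Implicit Arguments. Unset Strict Implicit. Unset Printing Implicit Defensive.

Section Syn.
Variable Sigma : Type.
Local Notation E := (Exp Sigma).
Local Notation EV := (Var Sigma).

Inductive T : Type :=
| TZ : T | TF : nat -> T | TB : nat -> T | TA : Sigma -> T -> T
| TP : T -> T -> T | TM : T -> T.

Fixpoint shift (k : nat) (t : T) : T :=
  match t with
  | TZ => TZ | TF n => TF n
  | TB i => TB (if i < k then i else i.+1)
  | TA a t => TA a (shift k t)
  | TP t1 t2 => TP (shift k t1) (shift k t2)
  | TM t => TM (shift k.+1 t)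
  end.

Fixpoint inst (c : nat) (u : T) (t : T) : T :=
  match t with
  | TZ => TZ | TF n => TF n
  | TB i => if i < c then TB i else if i == c then u else TB i.-1
  | TA a t => TA a (inst c u t)
  | TP t1 t2 => TP (inst c u t1) (inst c u t2)
  | TM t => TM (inst c.+1 (shift 0 u) t)
  end.

Ltac noif x := lazymatch x with context[if _ then _ else _] => fail | _ => idtac end.
Ltac crush := repeat (simpl; match goal with
  | |- context[if ?x < ?y then _ else _] => noif x; noif y;
      let E := fresh "E" in case E: (x < y)
  | |- context[if ?x == ?y then _ else _] => noif x; noif y;
      let E := fresh "E" in case E: (x == y)
  end);
  try reflexivity; try (congr TB); try lia; try (exfalso; lia).

Lemma shift_shift t j k : j <= k -> shift j (shift k t) = shift k.+1 (shift j t).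
Proof.
elim: t j k => //= [i|a t IH|t1 IH1 t2 IH2|t IH] j k jk;
  [crush|by rewrite IH|by rewrite IH1 // IH2|by rewrite IH].
Qed.

Lemma inst_shift t c u : inst c u (shift c t) = t.
Proof.
elim: t c u => //= [i|a t IH|t1 IH1 t2 IH2|t IH] c u;
  [crush|by rewrite IH|by rewrite IH1 IH2|by rewrite IH].
Qed.

Lemma shift_inst_hi s c u k : c <= k ->
  shift k (inst c u s) = inst c (shift k u) (shift k.+1 s).
Proof.
elim: s c u k => //= [i|a t IH|t1 IH1 t2 IH2|t IH] c u k ck;
  [crush|by rewrite IH|by rewrite IH1 // IH2|by rewrite IH // -(shift_shift _ (leq0n _))].
Qed.

Lemma shift_inst_lo s c u j : j <= c ->
  shift j (inst c u s) = inst c.+1 (shift j u) (shift j s).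
Proof.
elim: s c u j => //= [i|a t IH|t1 IH1 t2 IH2|t IH] c u j jc;
  [crush|by rewrite IH|by rewrite IH1 // IH2|by rewrite IH // -(shift_shift _ (leq0n _))].
Qed.

Inductive stepD : T -> Sigma -> T -> Prop :=
| sD_act a t : stepD (TA a t) a t
| sD_pl t1 t2 a t' : stepD t1 a t' -> stepD (TP t1 t2) a t'
| sD_pr t1 t2 a t' : stepD t2 a t' -> stepD (TP t1 t2) a t'
| sD_mu b a b' : stepD b a b' -> stepD (TM b) a (inst 0 (TM b) b').

Inductive outD : T -> nat -> Prop :=
| oD_f v : outD (TF v) v
| oD_pl t1 t2 v : outD t1 v -> outD (TP t1 t2) v
| oD_pr t1 t2 v : outD t2 v -> outD (TP t1 t2) v
| oD_mu b v : outD b v -> outD (TM b) v.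

Lemma sD_inv t a t' : stepD t a t' ->
  match t with
  | TA b s => b = a /\ s = t'
  | TP t1 t2 => stepD t1 a t' \/ stepD t2 a t'
  | TM b => exists2 b', stepD b a b' & t' = inst 0 (TM b) b'
  | _ => False end.
Proof. by case=> //=; eauto. Qed.

Lemma oD_inv t v : outD t v ->
  match t with
  | TF w => w = v
  | TP t1 t2 => outD t1 v \/ outD t2 v
  | TM b => outD b v
  | _ => False end.
Proof. by case=> //=; eauto. Qed.

Lemma st_inv (e : E) a e' : step e a e' ->
  match e with
  | Act b s => b = a /\ s = e'
  | Plus t1 t2 => step t1 a e' \/ step t2 a e'
  | Mu w b => exists2 b', step b a b' & e' = subst (upd EV w (Mu w b)) b'
  | _ => False end.
Proof. by case=> //=; eauto. Qed.

Lemma o_inv (e : E) v : out e v ->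
  match e with
  | Var w => w = v
  | Plus t1 t2 => out t1 v \/ out t2 v
  | Mu w b => out b v /\ v <> w
  | _ => False end.
Proof. by case=> //=; eauto. Qed.

Lemma stepD_shift s k a t' :
  stepD (shift k s) a t' <-> exists2 s', stepD s a s' & t' = shift k s'.
Proof.
elim: s k a t' => [||i|b s IH|s1 IH1 s2 IH2|s IH] k a t'; split => /=;
  try (by move/sD_inv); try (by case=> ? /sD_inv).
- by case/sD_inv => <- <-; exists s => //; constructor.
- by case=> s' /sD_inv [<- <-] ->; constructor.
- case/sD_inv => [/IH1|/IH2] [s' ? ->]; exists s' => //; by constructor.
- case=> s' /sD_inv [H|H] ->; [apply: sD_pl; apply/IH1|apply: sD_pr; apply/IH2]; by exists s'.
- case/sD_inv => b' /IH [s' ? ->] ->; exists (inst 0 (TM s) s'); first by constructor.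
  by rewrite shift_inst_hi.
- case=> s' /sD_inv [b' H ->] ->.
  rewrite shift_inst_hi //=; constructor; apply/IH; by exists b'.
Qed.

Lemma outD_shift s k v : outD (shift k s) v <-> outD s v.
Proof.
elim: s k => [||i|b s IH|s1 IH1 s2 IH2|s IH] k; split => /=;
  try (by move/oD_inv); try (by move/oD_inv => ->; constructor).
- by move/oD_inv => [/IH1|/IH2] ?; [apply: oD_pl|apply: oD_pr].
- by move/oD_inv => [|] ?; [apply: oD_pl; apply/IH1|apply: oD_pr; apply/IH2].
- by move/oD_inv/IH => ?; constructor.
- by move/oD_inv => ?; constructor; apply/IH.
Qed.

Definition up (rho : nat -> T) (w : nat) : nat -> T :=
  fun u => if u == w then TB 0 else shift 0 (rho u).

Fixpoint dbe (rho : nat -> T) (e : E) : T :=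
  match e with
  | Zero => TZ
  | Var v => rho v
  | Act a e => TA a (dbe rho e)
  | Plus e f => TP (dbe rho e) (dbe rho f)
  | Mu w e => TM (dbe (up rho w) e)
  end.

Lemma dbe_ext e r1 r2 : (forall u, u \in fv e -> r1 u = r2 u) -> dbe r1 e = dbe r2 e.
Proof.
elim: e r1 r2 => //= [v|a e IH|e1 IH1 e2 IH2|w e IH] r1 r2 H.
- by apply: H; rewrite inE.
- by rewrite (IH r1 r2).
- by rewrite (IH1 r1 r2) ?(IH2 r1 r2) // => u Hu; apply: H; rewrite mem_cat Hu ?orbT.
- congr TM; apply: IH => u Hu; rewrite /up; case: eqP => // /eqP ne.
  by rewrite H // mem_filter ne.
Qed.

Lemma shift_dbe e rho k : shift k (dbe rho e) = dbe (fun u => shift k (rho u)) e.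
Proof.
elim: e rho k => //= [a e IH|e1 IH1 e2 IH2|w e IH] rho k;
  [by rewrite IH|by rewrite IH1 IH2|].
congr TM; rewrite IH; apply: dbe_ext => u _; rewrite /up; case: eqP => //= _.
by rewrite (shift_shift _ (leq0n k)).
Qed.

Lemma inst_dbe e rho c u : inst c u (dbe rho e) = dbe (fun x => inst c u (rho x)) e.
Proof.
elim: e rho c u => //= [a e IH|e1 IH1 e2 IH2|w e IH] rho c u;
  [by rewrite IH|by rewrite IH1 IH2|].
congr TM; rewrite IH; apply: dbe_ext => x _; rewrite /up; case: eqP => //= _.
by rewrite shift_inst_lo.
Qed.

Lemma fresh_notin l : fresh l \notin l.
Proof.
have H : forall x, x \in l -> x <= foldr maxn 0 l.
  elim: l => //= y l IH x; rewrite inE => /orP[/eqP->|/IH]; first exact: leq_maxl.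
  by move=> H; apply: leq_trans H (leq_maxr _ _).
by apply/negP => /H; rewrite /fresh ltnn.
Qed.

Lemma dbe_up_notin t rho w : w \notin fv t -> dbe (up rho w) t = shift 0 (dbe rho t).
Proof.
move=> Hw; rewrite shift_dbe; apply: dbe_ext => u Hu; rewrite /up; case: eqP => // eu.
by move: Hw; rewrite -eu Hu.
Qed.

Lemma dbe_subst e s rho : dbe rho (subst s e) = dbe (fun u => dbe rho (s u)) e.
Proof.
elim: e s rho => //= [a e IH|e1 IH1 e2 IH2|w e IH] s rho;
  [by rewrite IH|by rewrite IH1 IH2|].
set avoid := flatten _.
set w' := if w \in avoid then fresh avoid else w.
have Hav : forall u, u \in fv e -> u != w -> w' \notin fv (s u).
  move=> u Hu uw; have sub : forall x, x \in fv (s u) -> x \in avoid.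
    move=> x Hx; apply/flattenP; exists (fv (s u)) => //.
    by apply: map_f; rewrite mem_filter uw Hu.
  rewrite /w'; case: ifP => Hw.
    by apply/negP => /sub; apply/negP; apply: fresh_notin.
  by apply/negP => /sub; rewrite Hw.
congr TM; rewrite IH; apply: dbe_ext => u Hu; rewrite /up /upd.
case: eqP => [_|/eqP uw] /=; first by rewrite eqxx.
by rewrite dbe_up_notin // Hav.
Qed.

Lemma dbe_inst_mu w e e' rho :
  inst 0 (dbe rho (Mu w e)) (dbe (up rho w) e') =
  dbe rho (subst (upd (Var Sigma) w (Mu w e)) e').
Proof.
rewrite inst_dbe dbe_subst; apply: dbe_ext => u _; rewrite /up /upd.
by case: eqP => //= _; rewrite inst_shift.
Qed.

Lemma gen_step e rho a t :
  stepD (dbe rho e) a t <->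
  (exists2 e', step e a e' & t = dbe rho e') \/
  (exists2 u, out e u & stepD (rho u) a t).
Proof.
elim: e rho a t => [|v|b e IH|e1 IH1 e2 IH2|w e IH] rho a t; split => /=.
- by move/sD_inv.
- by case=> [[? /st_inv]|[? /o_inv]].
- by move=> H; right; exists v => //; constructor.
- by case=> [[? /st_inv //]|[? /o_inv ->]].
- by case/sD_inv => <- <-; left; exists e => //; constructor.
- by case=> [[? /st_inv [<- <-] ->]|[? /o_inv]]; first constructor.
- case/sD_inv => [/IH1|/IH2] [[x H1 H2]|[x H1 H2]]; [left|right|left|right]; exists x => //;
  by constructor.
- case=> [[x /st_inv [H1|H1] H2]|[x /o_inv [H1|H1] H2]].
  + by apply: sD_pl; apply/IH1; left; exists x.
  + by apply: sD_pr; apply/IH2; left; exists x.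
  + by apply: sD_pl; apply/IH1; right; exists x.
  + by apply: sD_pr; apply/IH2; right; exists x.
- case/sD_inv => b' /IH [[x H1 H2]|[x H1 H2]] ->.
    left; exists (subst (upd EV w (Mu w e)) x); first by constructor.
    by rewrite H2 -dbe_inst_mu.
  move: H2; rewrite /up; case: eqP => [_ /sD_inv //|/eqP xw].
  case/stepD_shift => s' Hs ->; right; exists x; last by rewrite inst_shift.
  by constructor => // /eqP; rewrite (negbTE xw).
- case=> [[x /st_inv [e' H1 ->] H2]|[x /o_inv [H1 H3] H2]].
    rewrite H2 -dbe_inst_mu /=; constructor; apply/IH; left; by exists e'.
  have -> : t = inst 0 (TM (dbe (up rho w) e)) (shift 0 t) by rewrite inst_shift.
  constructor; apply/IH; right; exists x => //.
  rewrite /up; case: eqP => // _; apply/stepD_shift; by exists t.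
Qed.

Lemma gen_out e rho v :
  outD (dbe rho e) v <-> exists2 u, out e u & outD (rho u) v.
Proof.
elim: e rho v => [|x|b e IH|e1 IH1 e2 IH2|w e IH] rho v; split => /=.
- by move/oD_inv.
- by case=> ? /o_inv.
- by move=> H; exists x => //; constructor.
- by case=> ? /o_inv ->.
- by move/oD_inv.
- by case=> ? /o_inv.
- case/oD_inv => [/IH1|/IH2] [x H1 H2]; exists x => //; by constructor.
- case=> x /o_inv [H1|H1] H2; [apply: oD_pl; apply/IH1|apply: oD_pr; apply/IH2]; by exists x.
- case/oD_inv/IH => x H1; rewrite /up; case: eqP => [_ /oD_inv //|/eqP xw].
  move/outD_shift => H2; exists x => //; constructor => // /eqP; by rewrite (negbTE xw).
- case=> x /o_inv [H1 H3] H2; constructor; apply/IH; exists x => //.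
  by rewrite /up; case: eqP => // _; apply/outD_shift.
Qed.

End Syn.
Section Bis.
Variable Sigma : Type.
Local Notation E := (Exp Sigma).
Local Notation EV := (Var Sigma).
Implicit Types (x y z e : E) (s : nat -> E).

Definition db0 (x : E) : T Sigma := dbe (@TF Sigma) x.

Lemma step_db x a t : stepD (db0 x) a t <-> exists2 x', step x a x' & t = db0 x'.
Proof.
rewrite /db0 gen_step; split; last by left.
by move=> [//|[u _ H]]; have := sD_inv H.
Qed.

Lemma out_db x v : outD (db0 x) v <-> out x v.
Proof.
rewrite /db0 gen_out; split; first by move=> [u H /oD_inv Huv]; rewrite -Huv.
by move=> H; exists v => //; constructor.
Qed.

Lemma bisim_refl x : bisim x x.
Proof.
exists (fun e f : E => e = f); last by [].
move=> e f ->; split; [|split] => //; by move=> a e' H; exists e'.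
Qed.

Lemma bisim_sym x y : bisim x y -> bisim y x.
Proof.
case=> Rel HR Hxy; exists (fun e f => Rel f e) => // e f /HR [H1 [H2 H3]].
split; [|split] => //; by move=> v; split => /H3.
Qed.

Lemma bisim_trans x y z : bisim x y -> bisim y z -> bisim x z.
Proof.
case=> R1 H1 Hxy [R2 H2 Hyz].
exists (fun e f => exists2 g, R1 e g & R2 g f); last by exists y.
move=> e f [g /H1 [A1 [B1 C1]] /H2 [A2 [B2 C2]]]; split; [|split].
- move=> a e' /A1 [g' /A2 [f' ? ?] ?]; exists f' => //; by exists g'.
- move=> a f' /B2 [g' /B1 [e' ? ?] ?]; exists e' => //; by exists g'.
- by move=> v; rewrite C1 C2.
Qed.

Lemma alpha_bisim x y : db0 x = db0 y -> bisim x y.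
Proof.
move=> Hxy; exists (fun e f => db0 e = db0 f) => // e f Hef; split; [|split].
- move=> a e' H; have : stepD (db0 f) a (db0 e') by rewrite -Hef; apply/step_db; exists e'.
  by case/step_db => f' ? ->; exists f'.
- move=> a f' H; have : stepD (db0 e) a (db0 f') by rewrite Hef; apply/step_db; exists f'.
  by case/step_db => e' ? ->; exists e'.
- by move=> v; rewrite -!out_db Hef.
Qed.

Lemma cls_eq x y : cls x = cls y <-> bisim x y.
Proof.
split.
  move=> /(congr1 (@proj1_sig _ _)) /= H.
  by have := bisim_refl y; rewrite -H.
move=> Hxy; apply: eq_exist; apply: funext => z; apply: propext; split.
  by apply: bisim_trans; apply: bisim_sym.
by apply: bisim_trans.
Qed.

Lemma alpha_cls x y : db0 x = db0 y -> cls x = cls y.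
Proof. by move/alpha_bisim/cls_eq. Qed.

Lemma qstep_cls x a Y : qstep (cls x) a Y <-> exists2 x', step x a x' & Y = cls x'.
Proof.
split; last by case=> x' H ->; exists x, x'.
case=> e0 [e1 [/esym/cls_eq [Rel HR Hb] -> Hst]].
case: (HR _ _ Hb) => [A _]; case: (A _ _ Hst) => x' Hx' Hr.
exists x' => //; apply/cls_eq; by exists Rel.
Qed.

Lemma qout_cls x v : qout (cls x) v <-> out x v.
Proof.
split; last by move=> H; exists x.
case=> e0 /esym/cls_eq [Rel HR Hb] H.
by case: (HR _ _ Hb) => [_ [_ /(_ v) [/(_ H)]]].
Qed.

Lemma db0_subst s e : db0 (subst s e) = dbe (fun u => db0 (s u)) e.
Proof. exact: dbe_subst. Qed.

Lemma sub_step_fwd s e a x : step (subst s e) a x ->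
  (exists2 e', step e a e' & cls x = cls (subst s e')) \/
  (exists u y, [/\ out e u, step (s u) a y & cls x = cls y]).
Proof.
move=> H; have : stepD (db0 (subst s e)) a (db0 x) by apply/step_db; exists x.
rewrite db0_subst gen_step => -[[e' He' Hx]|[u Hu /step_db [y Hy Hx]]].
  left; exists e' => //; apply: alpha_cls; by rewrite Hx db0_subst.
right; exists u, y; split => //; exact: alpha_cls.
Qed.

Lemma sub_step1 s e a (e' : E) : step e a e' ->
  exists2 x, step (subst s e) a x & cls x = cls (subst s e').
Proof.
move=> H; have : stepD (db0 (subst s e)) a (db0 (subst s e')).
  rewrite !db0_subst; apply/gen_step; left; by exists e'.
by case/step_db => x Hx Heq; exists x => //; apply: alpha_cls.
Qed.

Lemma sub_step2 s e u a y : out e u -> step (s u) a y ->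
  exists2 x, step (subst s e) a x & cls x = cls y.
Proof.
move=> Hu Hy; have : stepD (db0 (subst s e)) a (db0 y).
  rewrite db0_subst; apply/gen_step; right; exists u => //; apply/step_db; by exists y.
by case/step_db => x Hx Heq; exists x => //; apply: alpha_cls.
Qed.

Lemma sub_out s e v : out (subst s e) v <-> exists2 u, out e u & out (s u) v.
Proof.
rewrite -out_db db0_subst gen_out; split; case=> u Hu H; exists u => //; by apply/out_db.
Qed.

End Bis.
From mathcomp Require Import lra.
Local Open Scope ring_scope.
Local Open Scope classical_set_scope.

Section Met.
Variables (R : realType) (Sigma : Type) (bd : Q Sigma -> Q Sigma -> R).
Hypothesis Hbd : is_bd bd.
Local Notation E := (Exp Sigma).
Implicit Types (z w : (Sigma * Q Sigma) + nat) (B : set ((Sigma * Q Sigma) + nat)).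

Lemma ne0 T (A : set T) : ~ A = set0 -> A !=set0.
Proof. by move=> H; apply/set0P/eqP. Qed.

Lemma bd_ge0 X Y : 0 <= bd X Y.
Proof. by case: Hbd => [[H _ _ _] _ _]; case/andP: (H X Y). Qed.
Lemma bd_le1 X Y : bd X Y <= 1.
Proof. by case: Hbd => [[H _ _ _] _ _]; case/andP: (H X Y). Qed.
Lemma bd_sym X Y : bd X Y = bd Y X.
Proof. by case: Hbd => [[_ _ H _] _ _]. Qed.

Definition H1 (A B : set ((Sigma * Q Sigma) + nat)) : R :=
  Defs.sup0 [set s | exists2 x, A x & s = Defs.inf1 [set dup bd x y | y in B]].

Lemma bd_H X Y : bd X Y = Num.max (H1 (beta X) (beta Y)) (H1 (beta Y) (beta X)).
Proof.
case: Hbd => [_ Hfix _]; have := congr1 (fun F => F X Y) Hfix.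
by rewrite /Phi /hausdorff /H1 => <-.
Qed.

Lemma dup_ge0 z w : 0 <= dup bd z w.
Proof.
case: z => [[a x]|v]; case: w => [[b y]|w] //=.
- by case: (pselect (a = b)) => H //=; rewrite divr_ge0 ?bd_ge0.
- by case: eqP.
Qed.

Lemma dup_le1 z w : dup bd z w <= 1.
Proof.
case: z => [[a x]|v]; case: w => [[b y]|w] //=.
- case: (pselect (a = b)) => H //=; have := bd_le1 x y; have := bd_ge0 x y; lra.
- by case: eqP.
Qed.

Lemma inf1_le1 z B : Defs.inf1 [set dup bd z y | y in B] <= 1.
Proof.
rewrite /Defs.inf1; case: pselect => [//|H0]; case: (ne0 H0) => r [y By _].
apply: le_trans (dup_le1 z y); apply: ge_inf; last by exists y.
by exists 0 => _ [w _ <-]; apply: dup_ge0.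
Qed.

Lemma inf1_le z B y : B y -> Defs.inf1 [set dup bd z y | y in B] <= dup bd z y.
Proof.
move=> By; rewrite /Defs.inf1; case: pselect => [H0|H0].
  have Hy : [set dup bd z y | y in B] (dup bd z y) by exists y.
  by rewrite H0 in Hy.
  
apply: ge_inf; last by exists y.
by exists 0 => _ [w _ <-]; apply: dup_ge0.
Qed.

Lemma H1_ge A B x : A x -> Defs.inf1 [set dup bd x y | y in B] <= H1 A B.
Proof.
move=> Ax; rewrite /H1 /Defs.sup0; case: pselect => [H0|H0].
  have Hy : [set s | exists2 x, A x & s = Defs.inf1 [set dup bd x y | y in B]]
    (Defs.inf1 [set dup bd x y | y in B]) by exists x.
  by rewrite H0 in Hy.
apply: ub_le_sup; last by exists x.
by exists 1 => _ [x' _ ->]; apply: inf1_le1.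
Qed.

Lemma H1_le A B c : 0 <= c ->
  (forall x, A x -> Defs.inf1 [set dup bd x y | y in B] <= c) -> H1 A B <= c.
Proof.
move=> c0 H; rewrite /H1 /Defs.sup0; case: pselect => [H0|H0] //; have ne := ne0 H0.
by apply: ge_sup => // _ [x Ax ->]; apply: H.
Qed.

Lemma H1_le1 A B : H1 A B <= 1.
Proof. by apply: H1_le => // x _; apply: inf1_le1. Qed.

Lemma inf1_le_eps z B c d : 0 < d ->
  (forall eps, 0 < eps -> eps < d -> exists2 y, B y & dup bd z y <= c + eps) ->
  Defs.inf1 [set dup bd z y | y in B] <= c.
Proof.
move=> d0 H; apply/ler_addgt0Pr => eps e0.
pose e1 := Num.min eps (d / 2).
have e10 : 0 < e1 by rewrite lt_min e0 divr_gt0.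
have e1d : e1 < d by rewrite gt_min; apply/orP; right; lra.
case: (H e1 e10 e1d) => y By Hy.
apply: le_trans (inf1_le z By) _; apply: le_trans Hy _.
by rewrite lerD2l ge_min lexx.
Qed.

Lemma match_any X Y z c : bd X Y < c -> c <= 1 -> beta X z ->
  exists2 w, beta Y w & dup bd z w < c.
Proof.
move=> Hc c1 Hz.
have Hi : Defs.inf1 [set dup bd z y | y in beta Y] < c.
  apply: le_lt_trans Hc; rewrite bd_H; apply: le_trans (H1_ge _ Hz) _.
  by rewrite le_max lexx.
move: Hi; rewrite /Defs.inf1; case: pselect => [H0|H0] /=; first by move=> ?; lra.
have ne := ne0 H0.
by case/(inf_lt ne) => _ [w Bw <-] Hw; exists w.
Qed.

Lemma out_match X Y v : bd X Y < 1 -> qout X v -> qout Y v.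
Proof.
move=> H Hv; case: (match_any (z := inr v) H (lexx _) Hv) => [][[b W]|w] Bw //=.
  by rewrite ltxx.
by case: eqP => [->//|]; rewrite ltxx.
Qed.

Lemma step_match X Y a X' c : bd X Y < c -> c <= 1 -> qstep X a X' ->
  exists2 Y', qstep Y a Y' & bd X' Y' / 2 < c.
Proof.
move=> H c1 Hs; case: (match_any (z := inl (a, X')) H c1 Hs) => [][[b W]|w] Bw //=.
  by case: pselect => [Hab|H0] /= Hl; [subst b; exists W|lra].
by lra.
Qed.

Lemma bigmax_ge n (F : 'I_n -> R) j : F j <= \big[Num.max/0]_(i < n) F i.
Proof.
elim: n F j => [|n IH] F j; first by case: j.
rewrite big_ord_recl; case: (unliftP ord0 j) => [j' ->|->]; last by rewrite le_max lexx.
by rewrite le_max (IH (fun i => F (lift ord0 i))) orbT.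
Qed.

Lemma bigmax_ge0 n (F : 'I_n -> R) : 0 <= \big[Num.max/0]_(i < n) F i.
Proof.
elim: n F => [|n IH] F; first by rewrite big_ord0.
by rewrite big_ord_recl le_max IH orbT.
Qed.

Variables (m : nat) (vs : 'I_m -> nat).
Hypothesis Hvs : injective vs.

Definition Mg (g h : 'I_m -> E) := \big[Num.max/0]_(j < m) bd (cls (g j)) (cls (h j)).
Definition Kb (g h : 'I_m -> E) e f := Num.max (bd (cls e) (cls f)) (Mg g h).

Lemma Mg_sym g h : Mg g h = Mg h g.
Proof. by apply: eq_bigr => j _; rewrite bd_sym. Qed.

Lemma Kb_sym g h e f : Kb g h e f = Kb h g f e.
Proof. by rewrite /Kb Mg_sym bd_sym. Qed.

Lemma senv_vs (g : 'I_m -> E) j : senv vs g (vs j) = g j.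
Proof.
rewrite /senv; case: pickP => [j' /eqP /Hvs -> //|/(_ j)].
by rewrite eqxx.
Qed.

Lemma senv_out (g : 'I_m -> E) u :
  (exists2 j, vs j = u & senv vs g u = g j) \/
  ((forall h : 'I_m -> E, senv vs h u = Var Sigma u)).
Proof.
case Ep: [pick j | vs j == u] => [j|].
  left; exists j; last by rewrite /senv Ep.
  by move: Ep; case: pickP => // j' /eqP Hj [<-].
by right => h; rewrite /senv Ep.
Qed.

Lemma one c : 0 <= c ->
  (forall g h e f, bd (cls (subst (senv vs g) e)) (cls (subst (senv vs h) f))
     <= Kb g h e f + c) ->
  forall g h e f,
  H1 (beta (cls (subst (senv vs g) e))) (beta (cls (subst (senv vs h) f)))
    <= Kb g h e f + c / 2.
Proof.
move=> c0 IH g h e f.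
set K := Kb g h e f.
have hb : bd (cls e) (cls f) <= K by rewrite /K /Kb le_max lexx.
have hMg : Mg g h <= K by rewrite /K /Kb le_max lexx orbT.
have hMg0 : 0 <= Mg g h := bigmax_ge0 _.
have K0 : 0 <= K by apply: le_trans hMg.
have hM : forall j, bd (cls (g j)) (cls (h j)) <= K.
  move=> j; apply: le_trans hMg.
  exact: (bigmax_ge (fun j => bd (cls (g j)) (cls (h j))) j).
case: (leP 1 K) => K1.
  apply: le_trans (H1_le1 _ _) _; lra.
apply: H1_le; first lra.
move=> z Hz; apply: (inf1_le_eps (d := 1 - K)); first lra.
move=> eps e0 ed.
have outf : forall u, out e u -> out f u.
  move=> u Hu; apply/qout_cls; apply: (@out_match (cls e)); first lra.
  by apply/qout_cls.
have outh : forall j v, out (g j) v -> out (h j) v.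
  move=> j v Hv; apply/qout_cls; apply: (@out_match (cls (g j))).
    by have := hM j; lra.
  by apply/qout_cls.
move: Hz; rewrite /beta /=.
case: z => [[a Y1]|v] /= Hz.
- case/qstep_cls: Hz => x1 Hx1 ->.
  case: (sub_step_fwd Hx1) => [[e' He' Hc]|[u [y [Hu Hy Hc]]]].
  + have Hlt : bd (cls e) (cls f) < bd (cls e) (cls f) + eps by lra.
    have Hq : qstep (cls e) a (cls e') by apply/qstep_cls; exists e'.
    case: (step_match Hlt _ Hq) => [|W /qstep_cls [f' Hf' ->] Hw]; first lra.
    case: (sub_step1 (senv vs h) Hf') => x2 Hx2 Hc2.
    exists (inl (a, cls x2)); first by rewrite /beta /=; apply/qstep_cls; exists x2.
    rewrite /=; case: pselect => [Ha|Ha] //= ; rewrite Hc Hc2.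
    have := IH g h e' f'.
    have : Kb g h e' f' <= 2 * (K + eps).
      by rewrite /Kb ge_max; apply/andP; split; lra.
    lra.
  + case: (senv_out g u) => [[j Hj Hsu]|Hsu]; last first.
      by rewrite Hsu in Hy; have := st_inv Hy.
    rewrite Hsu in Hy.
    have Hgh : bd (cls (g j)) (cls (h j)) < K + eps by have := hM j; lra.
    have Hq : qstep (cls (g j)) a (cls y) by apply/qstep_cls; exists y.
    case: (step_match Hgh _ Hq) => [|W /qstep_cls [h2 Hh ->] Hw]; first lra.
    have Hfu : out f u := outf u Hu.
    have Hs : step (senv vs h u) a h2 by rewrite -Hj senv_vs.
    case: (sub_step2 Hfu Hs) => x2 Hx2 Hc2.
    exists (inl (a, cls x2)); first by rewrite /beta /=; apply/qstep_cls; exists x2.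
    rewrite /=; case: pselect => [Ha|Ha] //= ; rewrite Hc Hc2.
    lra.
- move/qout_cls: Hz; case/sub_out => u Hu Hv.
  have Hfu := outf u Hu.
  exists (inr v); last by rewrite /= eqxx; lra.
  rewrite /beta /=; apply/qout_cls; apply/sub_out; exists u => //.
  case: (senv_out g u) => [[j Hj Hsu]|Hsu].
    rewrite Hsu in Hv; rewrite -Hj senv_vs; exact: outh Hv.
  rewrite Hsu in Hv; rewrite Hsu; have := o_inv Hv => ->; constructor.
Qed.

Lemma all_n n : forall g h e f,
  bd (cls (subst (senv vs g) e)) (cls (subst (senv vs h) f))
     <= Kb g h e f + (2 ^+ n)^-1.
Proof.
elim: n => [|n IH] g h e f.
  rewrite expr0 invr1; have := bd_le1 (cls (subst (senv vs g) e)) (cls (subst (senv vs h) f)).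
  have : 0 <= Kb g h e f by rewrite /Kb le_max bd_ge0.
  lra.
have c0 : 0 <= (2 ^+ n : R)^-1 by rewrite invr_ge0 exprn_ge0.
have -> : (2 ^+ n.+1 : R)^-1 = (2 ^+ n)^-1 / 2 by rewrite exprS invfM mulrC.
rewrite bd_H ge_max; apply/andP; split; first exact: one.
rewrite Kb_sym; exact: one.
Qed.

Theorem main_bound g h e f :
  bd (cls (subst (senv vs g) e)) (cls (subst (senv vs h) f)) <= Kb g h e f.
Proof.
apply/ler_addgt0Pr => eps e0.
apply: le_trans (all_n (Num.bound eps^-1) g h e f) _.
rewrite lerD2l.
set n := Num.bound eps^-1.
have H1 : eps^-1 < n%:R by apply: Num.Theory.archi_boundP; rewrite invr_ge0 ltW.
have H2 : (n%:R : R) <= 2 ^+ n.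
  by rewrite -natrX ler_nat ltnW // ltn_expl.
have H3 : 0 < (2 ^+ n : R) by rewrite exprn_gt0.
rewrite -(ler_pM2r H3) mulVf ?gt_eqF //.
have ie : 0 < eps^-1 by rewrite invr_gt0.
rewrite -(ler_pM2l ie) mulr1 mulrA mulVf ?gt_eqF // mul1r.
by apply: le_trans (ltW H1) H2.
Qed.

End Met.

Theorem mainTheorem12 (R : realType) (Sigma : Type) (bd : Q Sigma -> Q Sigma -> R)
  (Hbd : is_bd bd) (m : nat) (vs : 'I_m -> nat) (Hvs : injective vs)
  (e f : Exp Sigma) (g h : 'I_m -> Exp Sigma) :
  bd (cls (subst (senv vs g) e)) (cls (subst (senv vs h) f))
  <= Num.max (bd (cls e) (cls f))
             (\big[Num.max/0]_(j < m) bd (cls (g j)) (cls (h j))).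
Proof. exact: (main_bound Hbd Hvs g h e f). Qed.
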